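(* If for some $1\leq n<\omega$ the property $\mathrm{Gal}(\mathrm{Cub}_{\aleph_m},\aleph_m,2^{\aleph_m})$ fails for all $m\in[n,\omega)$, then $2^{\aleph_n}>\aleph_\omega$. In particular, $\aleph_\omega$ is not a strong limit cardinal.
   Context: $\mathrm{Cub}_\mu$ is the club filter on $\mu$. For a regular uncountable cardinal $\mu$, a cardinal $\lambda$ and a filter $\mathscr{F}$ over $\mu$, $\mathrm{Gal}(\mathscr{F},\mu,\lambda)$ means: every sequence $\langle A_\alpha\mid \alpha<\lambda\rangle$ of members of $\mathscr{F}$ has a set of indices $I\subseteq\lambda$ with $|I|=\mu$ and $\bigcap_{\alpha\in I}A_\alpha\in\mathscr{F}$. *)

(* Defs.v *)
(* plain Rocq type theory with classical axioms available.
   Cardinals are represented by types; |A| <= |B| is "A injects into B". *)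

Definition inj_into (A B : Type) : Prop :=
  exists f : A -> B, forall x y, f x = f y -> x = y.

Definition equipotent (A B : Type) : Prop :=
  exists f : A -> B, (forall x y, f x = f y -> x = y) /\ (forall b, exists a, f a = b).

Definition sub {T : Type} (P : T -> Prop) : Type := { x : T | P x }.

Definition strict_wellorder {T : Type} (lt : T -> T -> Prop) : Prop :=
  (forall x y z, lt x y -> lt y z -> lt x z) /\
  (forall x y, lt x y \/ x = y \/ lt y x) /\
  well_founded lt.

(* (T, lt) is an initial ordinal of cardinality aleph_{m+1}, given that
   (S) has cardinality aleph_m: T does not inject into S, but every proper
   initial segment of T does.  This pins down the order type omega_{m+1}. *)
Definition is_successor_initial_ordinal (S T : Type) (lt : T -> T -> Prop) : Prop :=
  strict_wellorder lt /\
  ~ inj_into T S /\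
  (forall x : T, inj_into (sub (fun y => lt y x)) S).

(* A family (Aleph m, lt m) of well-ordered types such that Aleph m is the
   initial ordinal omega_m (m >= 1), and Aleph 0 is countably infinite. *)
Definition aleph_family (Aleph : nat -> Type)
    (lt : forall m, Aleph m -> Aleph m -> Prop) : Prop :=
  equipotent (Aleph 0) nat /\
  (forall m, is_successor_initial_ordinal (Aleph m) (Aleph (S m)) (lt (S m))).

Definition unbounded {T : Type} (lt : T -> T -> Prop) (C : T -> Prop) : Prop :=
  forall x, exists y, C y /\ lt x y.

Definition closed {T : Type} (lt : T -> T -> Prop) (C : T -> Prop) : Prop :=
  forall x, (exists y, lt y x) ->
    (forall y, lt y x -> exists z, C z /\ lt y z /\ lt z x) -> C x.

Definition club {T : Type} (lt : T -> T -> Prop) (C : T -> Prop) : Prop :=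
  closed lt C /\ unbounded lt C.

Definition in_Cub {T : Type} (lt : T -> T -> Prop) (A : T -> Prop) : Prop :=
  exists C, club lt C /\ (forall x, C x -> A x).

(* Gal(F, mu, lambda) for a filter F on the type M (of cardinality mu),
   with lambda the cardinality of the index type L: every L-indexed family
   of members of F has a subfamily indexed by I with |I| = mu whose
   intersection is in F. *)
Definition Gal {M : Type} (F : (M -> Prop) -> Prop) (L : Type) : Prop :=
  forall A : L -> (M -> Prop), (forall i, F (A i)) ->
    exists I : L -> Prop, equipotent (sub I) M /\
      F (fun x => forall i, I i -> A i x).

(* Main.v *)
Require Import Defs.
From Stdlib Require Import PeanoNat Classical ClassicalEpsilon FunctionalExtensionality PropExtensionality ProofIrrelevance Wellfounded Lia Cantor.

Lemma inj_refl A : inj_into A A.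
Proof. exists (fun x => x); auto. Qed.

Lemma inj_trans A B C : inj_into A B -> inj_into B C -> inj_into A C.
Proof.
  intros [f Hf] [g Hg]; exists (fun x => g (f x)); auto.
Qed.

Lemma inj_prod A A' B B' : inj_into A A' -> inj_into B B' -> inj_into (A * B) (A' * B').
Proof.
  intros [f Hf] [g Hg]; exists (fun p => (f (fst p), g (snd p))).
  intros [a b] [c d] H; simpl in H; injection H; intros; f_equal; auto.
Qed.

Lemma inj_sum A A' B B' : inj_into A A' -> inj_into B B' -> inj_into (A + B) (A' + B').
Proof.
  intros [f Hf] [g Hg]; exists (fun p => match p with inl a => inl (f a) | inr b => inr (g b) end).
  intros [a|a] [b|b] H; try discriminate; injection H; intros; f_equal; auto.
Qed.

Lemma inj_option A B : inj_into A B -> inj_into (option A) (option B).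
Proof.
  intros [f Hf]; exists (fun o => match o with Some a => Some (f a) | None => None end).
  intros [a|] [b|] H; try discriminate; auto. injection H; intros; f_equal; auto.
Qed.

Lemma inj_pow A B : inj_into A B -> inj_into (A -> Prop) (B -> Prop).
Proof.
  intros [f Hf]; exists (fun S b => exists a, S a /\ f a = b).
  intros S T H. extensionality a. apply propositional_extensionality.
  assert (E := f_equal (fun F => F (f a)) H); simpl in E.
  split; intro Ha.
  - assert (Hb : exists a', T a' /\ f a' = f a).
    { rewrite <- E. eauto. }
    destruct Hb as [a' [Ta' E2]]. apply Hf in E2. subst; auto.
  - assert (Hb : exists a', S a' /\ f a' = f a).
    { rewrite E. eauto. }
    destruct Hb as [a' [Ta' E2]]. apply Hf in E2. subst; auto.
Qed.

Lemma inj_sub T (P : T -> Prop) : inj_into (sub P) T.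
Proof. exists (@proj1_sig _ _). intros [x hx] [y hy] E; simpl in E; subst.
  f_equal; apply proof_irrelevance. Qed.

Lemma inj_singleton T : inj_into T (T -> Prop).
Proof. exists (fun x y => x = y). intros x y H.
  assert (E := f_equal (fun F => F y) H); simpl in E. rewrite E; reflexivity. Qed.

Lemma cantor T : ~ inj_into (T -> Prop) T.
Proof.
  intros [f Hf].
  set (D := fun t => exists S, f S = t /\ ~ S t).
  destruct (classic (D (f D))) as [H|H].
  - pose proof H as H'. destruct H' as [S0 [E N]]. apply Hf in E. subst S0. exact (N H).
  - apply H. exists D; split; auto.
Qed.

Lemma inj_empty A B : ~ inhabited A -> inj_into A B.
Proof. intro H. exists (fun a => False_rect _ (H (inhabits a))). intros x. exfalso; apply H; exact (inhabits x). Qed.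

Lemma surj_inj A B (f : A -> B) : (forall b, exists a, f a = b) -> inj_into B A.
Proof.
  intros Hs. assert (g : forall b, {a | f a = b}).
  { intro b. apply constructive_indefinite_description. apply Hs. }
  exists (fun b => proj1_sig (g b)). intros x y E.
  rewrite <- (proj2_sig (g x)), <- (proj2_sig (g y)), E. reflexivity.
Qed.

Lemma wf_rec_choice T (lt : T -> T -> Prop) (wf : well_founded lt) X (d : X)
  (R : T -> (T -> X) -> X -> Prop) :
  (forall x g1 g2, (forall y, lt y x -> g1 y = g2 y) -> forall v, R x g1 v -> R x g2 v) ->
  exists f : T -> X, forall x, (exists v, R x f v) -> R x f (f x).
Proof.
  intros Hext.
  set (step := fun x (rec : forall y, lt y x -> X) =>
     epsilon (inhabits d) (fun v => exists g : T -> X, (forall y (h : lt y x), g y = rec y h) /\ R x g v)).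
  set (f := Fix wf (fun _ => X) step).
  exists f. intros x [v Hv].
  assert (Ef : f x = step x (fun y _ => f y)).
  { unfold f. rewrite Fix_eq. reflexivity.
    intros x0 f1 f2 H. unfold step. f_equal.
    apply functional_extensionality; intro v0. apply propositional_extensionality.
    split; intros [g [Hg Rg]]; exists g; split; auto; intros y h; rewrite (Hg y h); auto. }
  rewrite Ef. unfold step.
  assert (Hs := epsilon_spec (inhabits d) (fun v => exists g : T -> X, (forall y (h : lt y x), g y = f y) /\ R x g v)).
  simpl in Hs. destruct Hs as [g [Hg Rg]].
  - exists v, f. split; auto.
  - apply (Hext x g f); auto.
Qed.

Lemma wf_min T (lt : T -> T -> Prop) (wf : well_founded lt) (Q : T -> Prop) :
  (exists x, Q x) -> exists x, Q x /\ forall y, lt y x -> ~ Q y.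
Proof.
  intros [x Hx]. induction x as [x IH] using (well_founded_ind wf).
  destruct (classic (exists y, lt y x /\ Q y)) as [[y [Hy Qy]]|N].
  - apply (IH y Hy Qy).
  - exists x; split; auto. intros y Hy Qy; apply N; eauto.
Qed.

Definition trich {T} (lt : T -> T -> Prop) := forall x y : T, lt x y \/ x = y \/ lt y x.

Lemma compare T (lt : T -> T -> Prop) (wf : well_founded lt) (tr : trich lt) B :
  inj_into T B \/ exists a, inj_into B (sub (fun y => lt y a)).
Proof.
  destruct (classic (inhabited B)) as [[d]|NB].
  2:{ destruct (classic (inhabited T)) as [[t]|NT].
      - right. exists t. apply inj_empty; auto.
      - left. apply inj_empty; auto. }
  destruct (wf_rec_choice T lt wf B d (fun x g v => forall y, lt y x -> g y <> v)) as [f Hf].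
  { intros x g1 g2 H v Hv y Hy. rewrite <- H; auto. }
  destruct (classic (forall x, exists v, forall y, lt y x -> f y <> v)) as [A|A].
  - left. exists f. intros x y E.
    destruct (tr x y) as [h|[h|h]]; auto.
    + exfalso. apply (Hf y (A y) x h); auto.
    + exfalso. apply (Hf x (A x) y h); auto.
  - right. apply not_all_ex_not in A. destruct A as [a A].
    exists a.
    assert (Hb : forall b, exists y : sub (fun y => lt y a), f (proj1_sig y) = b).
    { intro b. apply NNPP; intro N. apply A. exists b. intros y hy E.
      apply N. exists (exist _ y hy). auto. }
    apply surj_inj with (fun y : sub (fun y => lt y a) => f (proj1_sig y)); auto.
Qed.

Lemma compare' T (lt : T -> T -> Prop) (wf : well_founded lt) (tr : trich lt) B :
  ~ inj_into B T -> inj_into T B.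
Proof.
  intro N. destruct (compare T lt wf tr B) as [H|[a H]]; auto.
  exfalso; apply N. eapply inj_trans; eauto. apply inj_sub.
Qed.

Lemma nat_sq : inj_into (nat * nat) nat.
Proof. exists Cantor.to_nat. intros x y E.
  rewrite <- (cancel_of_to x), <- (cancel_of_to y), E. reflexivity. Qed.

Lemma equi_inj A B : equipotent A B -> inj_into A B /\ inj_into B A.
Proof. intros [f [Hi Hs]]. split. exists f; auto. apply (surj_inj A B f Hs). Qed.

Lemma opt_inj P : inj_into (P * P) P -> inj_into nat P -> inj_into (option P) P.
Proof.
  intros H2 [i Hi]. eapply inj_trans; [|exact H2].
  exists (fun o => match o with None => (i 0, i 0) | Some x => (x, i 1) end).
  intros [a|] [b|] E; try injection E; intros; subst; auto.
  - apply Hi in H; discriminate.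
  - apply Hi in H; discriminate.
Qed.

Lemma sum_inj P : inj_into (P * P) P -> inj_into nat P -> inj_into (P + P) P.
Proof.
  intros H2 [i Hi]. eapply inj_trans; [|exact H2].
  exists (fun o => match o with inl x => (x, i 0) | inr x => (x, i 1) end).
  intros [a|a] [b|b] E; injection E; intros; subst; auto;
  apply Hi in H; discriminate.
Qed.

Definition Ctx (M P : Type) (ltM : M -> M -> Prop) :=
  is_successor_initial_ordinal P M ltM /\ inj_into (P * P) P /\ inj_into nat P.

Lemma leseg M P ltM : Ctx M P ltM -> forall z, inj_into (sub (fun y => ~ ltM z y)) P.
Proof.
  intros [[[Htr [Htri Hwf]] [Hno Hseg]] [H2 Hn]] z.
  eapply inj_trans; [| apply (opt_inj P H2 Hn)].
  eapply inj_trans; [| apply inj_option; apply (Hseg z)].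
  exists (fun y : sub (fun y => ~ ltM z y) =>
    match excluded_middle_informative (ltM (proj1_sig y) z) with
    | left h => Some (exist _ (proj1_sig y) h) | right _ => None end).
  intros [x hx] [y hy]; simpl.
  destruct (excluded_middle_informative (ltM x z)); destruct (excluded_middle_informative (ltM y z));
    intro E; try discriminate.
  - injection E; intros; subst. f_equal; apply proof_irrelevance.
  - assert (x = y).
    { destruct (Htri x z) as [?|[?|?]]; try contradiction.
      destruct (Htri y z) as [?|[?|?]]; try contradiction. congruence. }
    subst; f_equal; apply proof_irrelevance.
Qed.

Lemma bounded M P ltM : Ctx M P ltM -> forall J, inj_into J P -> forall f : J -> M,
  exists b, forall j, ltM (f j) b.
Proof.
  intros Hc J HJ f. pose proof Hc as [[[Htr [Htri Hwf]] [Hno Hseg]] [H2 Hn]].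
  apply NNPP; intro N. apply Hno.
  assert (Hj : forall b, exists j, ~ ltM (f j) b).
  { intro b. apply NNPP; intro N2. apply N. exists b. intro j. apply NNPP; intro N3. apply N2; eauto. }
  assert (e : forall z, {g : sub (fun y => ~ ltM z y) -> P | forall x y, g x = g y -> x = y}).
  { intro z. apply constructive_indefinite_description. apply (leseg M P ltM Hc). }
  assert (c : forall b, {j | ~ ltM (f j) b}).
  { intro b. apply constructive_indefinite_description. apply Hj. }
  eapply inj_trans; [| exact H2]. eapply inj_trans; [| apply inj_prod; [exact HJ | apply inj_refl]].
  exists (fun y => (proj1_sig (c y), proj1_sig (e (f (proj1_sig (c y)))) (exist _ y (proj2_sig (c y))))).
  intros x y E. injection E. intros E2 E1.
  destruct (c x) as [jx hx]; destruct (c y) as [jy hy]; simpl in *. subst jy.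
  destruct (e (f jx)) as [g Hg]; simpl in *. apply Hg in E2. injection E2; auto.
Qed.

Lemma M_pow M P ltM : Ctx M P ltM -> inj_into M (P -> Prop).
Proof.
  intros [[[Htr [Htri Hwf]] [Hno Hseg]] [H2 Hn]].
  destruct (compare M ltM Hwf Htri (P -> Prop)) as [H|[a H]]; auto.
  exfalso. apply (cantor P). eapply inj_trans; eauto.
Qed.

Lemma P_M M P ltM : Ctx M P ltM -> inj_into P M.
Proof.
  intros [[[Htr [Htri Hwf]] [Hno Hseg]] [H2 Hn]].
  destruct (compare M ltM Hwf Htri P) as [H|[a H]]; [contradiction|].
  eapply inj_trans; eauto. apply inj_sub.
Qed.

Definition lex {A B} (R1 : A -> A -> Prop) (R2 : B -> B -> Prop) (p q : A * B) :=
  R1 (fst p) (fst q) \/ (fst p = fst q /\ R2 (snd p) (snd q)).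

Lemma wf_lex A B (R1 : A -> A -> Prop) (R2 : B -> B -> Prop) :
  well_founded R1 -> well_founded R2 -> well_founded (lex R1 R2).
Proof.
  intros W1 W2 [a b]. revert b.
  induction a as [a IHa] using (well_founded_ind W1).
  intro b. induction b as [b IHb] using (well_founded_ind W2).
  constructor. intros [a' b'] [H|[E H]]; simpl in *.
  - apply IHa; auto.
  - subst. apply IHb; auto.
Qed.

Lemma trich_lex A B (R1 : A -> A -> Prop) (R2 : B -> B -> Prop) :
  trich R1 -> trich R2 -> trich (lex R1 R2).
Proof.
  intros T1 T2 [a b] [c d]. unfold lex; simpl.
  destruct (T1 a c) as [?|[?|?]]; auto. subst.
  destruct (T2 b d) as [?|[?|?]]; subst; auto.
Qed.

Definition mx {M} (ltM : M -> M -> Prop) (a b : M) :=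
  if excluded_middle_informative (ltM a b) then b else a.

Lemma irrefl {T} {lt : T -> T -> Prop} : well_founded lt -> forall x, ~ lt x x.
Proof. intros W x. induction x as [x IH] using (well_founded_ind W). intro h. exact (IH x h h). Qed.

Lemma sq M P ltM : Ctx M P ltM -> inj_into (M * M) M.
Proof.
  intros Hc. pose proof Hc as [[[Htr [Htri Hwf]] [Hno Hseg]] [H2 Hn]].
  set (key := fun p : M * M => (mx ltM (fst p) (snd p), p)).
  set (R := fun p q => lex ltM (lex ltM ltM) (key p) (key q)).
  assert (WR : well_founded R).
  { apply (wf_inverse_image _ _ (lex ltM (lex ltM ltM)) key). apply wf_lex; auto. apply wf_lex; auto. }
  assert (TR : trich R).
  { intros p q. unfold R. destruct (trich_lex _ _ _ _ Htri (trich_lex _ _ _ _ Htri Htri) (key p) (key q))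
      as [?|[E|?]]; auto. right; left. unfold key in E. injection E; auto. }
  destruct (compare (M * M) R WR TR M) as [H|[z H]]; auto.
  exfalso. apply Hno. eapply inj_trans; [exact H|].
  set (m := mx ltM (fst z) (snd z)).
  assert (le_tr : forall x y w, ~ ltM y x -> ~ ltM w y -> ~ ltM w x).
  { intros x y w h1 h2 h3. destruct (Htri x y) as [?|[?|?]]; subst; auto.
    apply h2. apply (Htr _ _ _ h3 H0). }
  assert (irr : forall x, ~ ltM x x) by (apply (irrefl Hwf)).
  assert (mx1 : forall a b, ~ ltM (mx ltM a b) a).
  { intros a b; unfold mx; destruct (excluded_middle_informative (ltM a b)); auto.
    intro h. exact (irr _ (Htr _ _ _ l h)). }
  assert (mx2 : forall a b, ~ ltM (mx ltM a b) b).
  { intros a b; unfold mx; destruct (excluded_middle_informative (ltM a b)); auto. }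
  assert (Hb : forall w, R w z -> ~ ltM m (fst w) /\ ~ ltM m (snd w)).
  { intros [x y] Hw. unfold R, lex, key in Hw; simpl in Hw.
    assert (Hk : ~ ltM m (mx ltM x y)).
    { destruct Hw as [h|[h _]]. intro h'. exact (irr _ (Htr _ _ _ h h')). rewrite h; auto. }
    simpl. split; eapply le_tr; eauto. }
  eapply inj_trans; [| exact H2].
  eapply inj_trans; [| apply inj_prod; apply (leseg M P ltM Hc m)].
  exists (fun w : sub (fun y => R y z) =>
     (exist (fun y => ~ ltM m y) (fst (proj1_sig w)) (proj1 (Hb _ (proj2_sig w))),
      exist (fun y => ~ ltM m y) (snd (proj1_sig w)) (proj2 (Hb _ (proj2_sig w))))).
  intros [[a b] h1] [[c d] h2] E. simpl in E. injection E; intros; subst.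
  f_equal; apply proof_irrelevance.
Qed.

Lemma le_lt_trans {M} {ltM : M -> M -> Prop} : strict_wellorder ltM ->
  forall a b c, ~ ltM b a -> ltM b c -> ltM a c.
Proof. intros [Htr [Htri Hwf]] a b c h1 h2.
  destruct (Htri a b) as [?|[?|?]]; subst; eauto. contradiction. Qed.

Lemma lt_le_trans {M} {ltM : M -> M -> Prop} : strict_wellorder ltM ->
  forall a b c, ltM a b -> ~ ltM c b -> ltM a c.
Proof. intros [Htr [Htri Hwf]] a b c h1 h2.
  destruct (Htri b c) as [?|[?|?]]; subst; eauto. contradiction. Qed.

Lemma mx_ge1 {M} {ltM : M -> M -> Prop} : strict_wellorder ltM -> forall a b, ~ ltM (mx ltM a b) a.
Proof. intros [Htr [Htri Hwf]] a b; unfold mx; destruct (excluded_middle_informative (ltM a b)); auto.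
  intro h. exact (irrefl Hwf _ (Htr _ _ _ l h)). apply irrefl; auto. Qed.

Lemma mx_ge2 {M} {ltM : M -> M -> Prop} : strict_wellorder ltM -> forall a b, ~ ltM (mx ltM a b) b.
Proof. intros [Htr [Htri Hwf]] a b; unfold mx; destruct (excluded_middle_informative (ltM a b)); auto.
  apply irrefl; auto. Qed.

Lemma mx_lt {M} {ltM : M -> M -> Prop} : forall a b c, ltM a c -> ltM b c -> ltM (mx ltM a b) c.
Proof. intros a b c h1 h2; unfold mx; destruct (excluded_middle_informative (ltM a b)); auto. Qed.

Lemma club_inter M P ltM (Hc : Ctx M P ltM) J (HJ : inj_into J P) (Cs : J -> M -> Prop) :
  (forall j, club ltM (Cs j)) -> club ltM (fun x => forall j, Cs j x).
Proof.
  intros Hcs. pose proof Hc as [[Hwo [Hno Hseg]] [H2 Hn]].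
  pose proof Hwo as [Htr [Htri Hwf]].
  split.
  - intros x Hp Hcof j. destruct (Hcs j) as [Hcl _]. apply Hcl; auto.
    intros y hy. destruct (Hcof y hy) as [z [Hz [h1 h2]]]. exists z; auto.
  - intro x.
    assert (next : forall j y, {z | Cs j z /\ ltM y z}).
    { intros j y. apply constructive_indefinite_description. destruct (Hcs j) as [_ Hu]. apply Hu. }
    assert (HJo : inj_into (option J) P).
    { eapply inj_trans; [apply inj_option; exact HJ | apply opt_inj; auto]. }
    assert (bnd : forall y, {b | forall o : option J,
       ltM (match o with None => y | Some j => proj1_sig (next j y) end) b}).
    { intro y. apply constructive_indefinite_description. apply (bounded M P ltM Hc _ HJo). }
    set (s := fix s k := match k with 0 => x | S k => proj1_sig (bnd (s k)) end).
    assert (Hinc : forall k, ltM (s k) (s (S k))).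
    { intro k. simpl. destruct (bnd (s k)) as [b Hb]; simpl. apply (Hb None). }
    assert (Hnx : forall k j, ltM (proj1_sig (next j (s k))) (s (S k))).
    { intros k j. simpl. destruct (bnd (s k)) as [b Hb]; simpl. apply (Hb (Some j)). }
    destruct (bounded M P ltM Hc nat Hn s) as [b0 Hb0].
    destruct (wf_min M ltM Hwf (fun b => forall k, ltM (s k) b)) as [b [Hb Hmin]]; [eauto|].
    exists b. split; [| apply (Hb 0)].
    intro j. destruct (Hcs j) as [Hcl _]. apply Hcl.
    + exists (s 0); auto.
    + intros y hy. pose proof (Hmin y hy) as N.
      apply not_all_ex_not in N. destruct N as [k Nk].
      destruct (next j (s k)) as [z [Hz1 Hz2]] eqn:Ez.
      exists z. split; auto. split.
      * eapply le_lt_trans; eauto.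
      * apply (Htr _ (s (S k))); auto. pose proof (Hnx k j) as hh. rewrite Ez in hh. exact hh.
Qed.

Lemma club_diag M P ltM (Hc : Ctx M P ltM) (Cs : M -> M -> Prop) :
  (forall i, club ltM (Cs i)) -> club ltM (fun x => forall i, ltM i x -> Cs i x).
Proof.
  intros Hcs. pose proof Hc as [[Hwo [Hno Hseg]] [H2 Hn]].
  pose proof Hwo as [Htr [Htri Hwf]].
  split.
  - intros x [y0 hy0] Hcof i hi. destruct (Hcs i) as [Hcl _]. apply Hcl; [eauto|].
    intros y hy. destruct (Hcof (mx ltM i y) (mx_lt _ _ _ hi hy)) as [z [Hz [h1 h2]]].
    exists z. split; [|split; auto].
    + apply Hz. eapply le_lt_trans; eauto. apply mx_ge1; auto.
    + eapply le_lt_trans; eauto. apply mx_ge2; auto.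
  - intro x.
    assert (nxt : forall y, {z | (forall i, ltM i y -> Cs i z) /\ ltM y z}).
    { intro y. apply constructive_indefinite_description.
      destruct (club_inter M P ltM Hc (sub (fun i => ltM i y)) (Hseg y)
                 (fun i => Cs (proj1_sig i)) (fun i => Hcs _)) as [_ Hu].
      destruct (Hu y) as [z [Hz1 Hz2]]. exists z. split; auto.
      intros i hi. exact (Hz1 (exist _ i hi)). }
    set (s := fix s k := match k with 0 => x | S k => proj1_sig (nxt (s k)) end).
    assert (Hinc : forall k, ltM (s k) (s (S k))).
    { intro k. simpl. destruct (nxt (s k)) as [b Hb]; simpl. apply Hb. }
    assert (Hin : forall k i, ltM i (s k) -> Cs i (s (S k))).
    { intros k i hi. simpl. destruct (nxt (s k)) as [b Hb]; simpl. apply Hb; auto. }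
    assert (Hmon : forall a d, ltM (s a) (s (S (a + d)))).
    { intros a d. induction d. rewrite Nat.add_0_r; auto.
      rewrite Nat.add_succ_r. eapply Htr; eauto. }
    destruct (bounded M P ltM Hc nat Hn s) as [b0 Hb0].
    destruct (wf_min M ltM Hwf (fun b => forall k, ltM (s k) b)) as [b [Hb Hmin]]; [eauto|].
    exists b. split; [| apply (Hb 0)].
    intros i hi. destruct (Hcs i) as [Hcl _]. apply Hcl.
    + exists (s 0); auto.
    + intros y hy.
      pose proof (Hmin y hy) as N. apply not_all_ex_not in N. destruct N as [k Nk].
      pose proof (Hmin i hi) as N. apply not_all_ex_not in N. destruct N as [k' Nk'].
      exists (s (S (S (k' + k)))). split; [|split; auto].
      * apply Hin. eapply le_lt_trans; eauto.
      * eapply le_lt_trans; eauto. eapply Htr; [|apply Hinc].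
        replace (S (k' + k)) with (S (k + k')) by lia. apply Hmon.
Qed.

Lemma galvin M P ltM (Hc : Ctx M P ltM) :
  ~ Gal (in_Cub ltM) (M -> Prop) -> inj_into (M -> Prop) (P -> Prop).
Proof.
  intro NG. pose proof Hc as [[Hwo [Hno Hseg]] [H2 Hn]].
  pose proof Hwo as [Htr [Htri Hwf]].
  unfold Gal in NG. apply not_all_ex_not in NG. destruct NG as [A NG].
  apply imply_to_and in NG. destruct NG as [HA NI].
  assert (Cf : forall a, {C | club ltM C /\ forall x, C x -> A a x}).
  { intro a. apply constructive_indefinite_description. apply HA. }
  set (C := fun a => proj1_sig (Cf a)).
  assert (HC1 : forall a, club ltM (C a)). { intro a. exact (proj1 (proj2_sig (Cf a))). }
  assert (HC2 : forall a x, C a x -> A a x). { intro a. exact (proj2 (proj2_sig (Cf a))). }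
  set (key := fun (d : M) (a : M -> Prop) => fun x => ~ ltM d x /\ C a x).
  set (small := fun F : (M -> Prop) -> Prop => exists g : P -> (M -> Prop), forall b, F b -> exists q, g q = b).
  assert (KEY : forall a0, exists d, small (fun b => key d b = key d a0)).
  { intro a0. apply NNPP; intro Nd.
    assert (Nd' : forall d, ~ small (fun b => key d b = key d a0)).
    { intros d h; apply Nd; eauto. }
    destruct (wf_rec_choice M ltM Hwf (M -> Prop) a0
       (fun i g v => key i v = key i a0 /\ forall j, ltM j i -> g j <> v)) as [a Ha].
    { intros x g1 g2 H v [h1 h2]. split; auto. intros j hj. rewrite <- H; auto. }
    assert (Ra : forall i, key i (a i) = key i a0 /\ forall j, ltM j i -> a j <> a i).
    { intro i. apply Ha. apply NNPP; intro N. apply (Nd' i).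
      assert (e : {e : sub (fun j => ltM j i) -> P | forall x y, e x = e y -> x = y}).
      { apply constructive_indefinite_description. apply Hseg. }
      destruct e as [e He].
      exists (fun q => match excluded_middle_informative (exists j, e j = q) with
               | left h => a (proj1_sig (proj1_sig (constructive_indefinite_description _ h)))
               | right _ => a0 end).
      intros b Hb.
      assert (Hj : exists j, ltM j i /\ a j = b).
      { apply NNPP; intro N2. apply N. exists b. split; auto.
        intros j hj E. apply N2; eauto. }
      destruct Hj as [j [hj E]]. exists (e (exist _ j hj)).
      destruct (excluded_middle_informative _) as [h|h].
      - destruct (constructive_indefinite_description _ h) as [j' Hj']; simpl.
        apply He in Hj'. subst j'. simpl. auto.
      - exfalso; apply h; eauto. }
    assert (ainj : forall i j, a i = a j -> i = j).
    { intros i j E. destruct (Htri i j) as [h|[h|h]]; auto.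
      - exfalso. apply (proj2 (Ra j) i h); auto.
      - exfalso. apply (proj2 (Ra i) j h); auto. }
    apply NI. exists (fun b => exists i, a i = b). split.
    - exists (fun b : sub (fun b => exists i, a i = b) =>
         proj1_sig (constructive_indefinite_description _ (proj2_sig b))).
      split.
      + intros [x hx] [y hy]; simpl.
        destruct (constructive_indefinite_description _ hx) as [i Hi];
        destruct (constructive_indefinite_description _ hy) as [j Hj]; simpl.
        intro; subst. f_equal. apply proof_irrelevance.
      + intro i. exists (exist _ (a i) (ex_intro _ i eq_refl)). simpl.
        destruct (constructive_indefinite_description _ _) as [j Hj]; simpl. auto.
    - assert (Hb : inj_into bool P).
      { eapply inj_trans; [|exact Hn]. exists (fun b : bool => if b then 0 else 1).
        intros [] [] E; auto; discriminate. }
      exists (fun x => forall b : bool,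
         (if b then C a0 else (fun x => forall j, ltM j x -> C (a j) x)) x).
      split.
      + apply (club_inter M P ltM Hc bool Hb). intros []; auto.
        apply (club_diag M P ltM Hc (fun j => C (a j))); auto.
      + intros x Hx b [i Ei]. subst b. apply HC2.
        destruct (Htri i x) as [h|h].
        * exact (Hx false i h).
        * assert (nl : ~ ltM i x).
          { intro h'. destruct h as [h|h]. subst. exact (irrefl Hwf _ h'). exact (irrefl Hwf _ (Htr _ _ _ h h')). }
          assert (E := f_equal (fun F => F x) (proj1 (Ra i))). simpl in E.
          unfold key in E.
          assert (HH : ~ ltM i x /\ C (a i) x). { rewrite E. split; auto. exact (Hx true). }
          exact (proj2 HH). }
  set (G := fun d s => match excluded_middle_informative (small (fun b => key d b = s)) with
     | left h => proj1_sig (constructive_indefinite_description _ h)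
     | right _ => fun _ _ => False end).
  assert (HG : forall a, exists d q, G d (key d a) q = a).
  { intro a. destruct (KEY a) as [d Hd]. exists d. unfold G.
    destruct (excluded_middle_informative _) as [h|h]; [|contradiction].
    destruct (constructive_indefinite_description _ h) as [g Hg]; simpl. apply Hg. reflexivity. }
  assert (dq : forall a, {p : M * P | G (fst p) (key (fst p) a) (snd p) = a}).
  { intro a. apply constructive_indefinite_description. destruct (HG a) as [d [q E]].
    exists (d, q); auto. }
  destruct (M_pow M P ltM Hc) as [enc Henc].
  assert (e' : forall d, {e : sub (fun y => ~ ltM d y) -> P | forall x y, e x = e y -> x = y}).
  { intro d. apply constructive_indefinite_description. apply (leseg M P ltM Hc). }
  eapply inj_trans; [| apply inj_pow; eapply inj_trans;
     [apply inj_sum; [apply inj_refl | apply (sum_inj P H2 Hn)] | apply (sum_inj P H2 Hn)]].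
  exists (fun a => fun o : P + (P + P) =>
     let d := fst (proj1_sig (dq a)) in let q := snd (proj1_sig (dq a)) in
     match o with
     | inl p => enc d p
     | inr (inl p) => exists x (h : ~ ltM d x), key d a x /\ proj1_sig (e' d) (exist _ x h) = p
     | inr (inr p) => p = q end).
  intros a b E.
  destruct (dq a) as [[da qa] Ea]; destruct (dq b) as [[db qb] Eb]; simpl in *.
  assert (Ed : da = db).
  { apply Henc. extensionality p. exact (f_equal (fun F => F (inl p)) E). }
  subst db.
  assert (Eq : qa = qb).
  { assert (E2 := f_equal (fun F => F (inr (inr qa))) E). simpl in E2.
    rewrite <- E2. reflexivity. }
  subst qb.
  assert (Ek : key da a = key da b).
  { destruct (e' da) as [e He]; simpl in E.
    extensionality x. apply propositional_extensionality.
    destruct (classic (ltM da x)) as [h|h].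
    - unfold key; split; intros [h1 _]; contradiction.
    - assert (E2 := f_equal (fun F => F (inr (inl (e (exist _ x h))))) E). simpl in E2.
      split; intro Hk.
      + assert (Hx : exists x0 (h0 : ~ ltM da x0), key da b x0 /\ e (exist _ x0 h0) = e (exist _ x h)).
        { rewrite <- E2. eauto. }
        destruct Hx as [x0 [h0 [Hk0 Ee]]]. apply He in Ee. injection Ee; intros; subst; auto.
      + assert (Hx : exists x0 (h0 : ~ ltM da x0), key da a x0 /\ e (exist _ x0 h0) = e (exist _ x h)).
        { rewrite E2. eauto. }
        destruct Hx as [x0 [h0 [Hk0 Ee]]]. apply He in Ee. injection Ee; intros; subst; auto. }
  rewrite <- Ea, <- Eb, Ek. reflexivity.
Qed.

Lemma pow_pair A B : inj_into ((A -> Prop) * (B -> Prop)) (A + B -> Prop).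
Proof.
  exists (fun p o => match o with inl a => fst p a | inr b => snd p b end).
  intros [S1 T1] [S2 T2] E. f_equal; extensionality x.
  - exact (f_equal (fun F => F (inl x)) E).
  - exact (f_equal (fun F => F (inr x)) E).
Qed.

Lemma curry_inj A B : inj_into (A -> (B -> Prop)) (A * B -> Prop).
Proof.
  exists (fun f p => f (fst p) (snd p)). intros f g E.
  extensionality a; extensionality b. exact (f_equal (fun F => F (a, b)) E).
Qed.

Theorem proposition4p14 :
  forall (Aleph : nat -> Type) (lt : forall m, Aleph m -> Aleph m -> Prop),
    aleph_family Aleph lt ->
    forall n : nat, 1 <= n ->
      (forall m : nat, n <= m ->
         ~ Gal (in_Cub (lt m)) (Aleph m -> Prop)) ->
      inj_into {m : nat & Aleph m} (Aleph n -> Prop) /\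
      ~ inj_into (Aleph n -> Prop) {m : nat & Aleph m}.
Proof.
  intros Aleph lt [H0 Hs] n Hn1 NG.
  assert (Basic : forall p, inj_into nat (Aleph p) /\ inj_into (Aleph p * Aleph p) (Aleph p)).
  { induction p as [|p [IH1 IH2]].
    - destruct (equi_inj _ _ H0) as [a b]. split; auto.
      eapply inj_trans; [apply inj_prod; exact a|]. eapply inj_trans; [apply nat_sq|]. auto.
    - assert (Hc : Ctx (Aleph (S p)) (Aleph p) (lt (S p))) by exact (conj (Hs p) (conj IH2 IH1)).
      split.
      + eapply inj_trans; [exact IH1|]. apply (P_M _ _ _ Hc).
      + apply (sq _ _ _ Hc). }
  assert (Hc : forall p, Ctx (Aleph (S p)) (Aleph p) (lt (S p))).
  { intro p. destruct (Basic p) as [Q1 Q2]. exact (conj (Hs p) (conj Q2 Q1)). }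
  assert (Up : forall d k, inj_into (Aleph k) (Aleph (d + k))).
  { induction d; intro k. apply inj_refl. simpl. eapply inj_trans; [apply IHd|]. apply (P_M _ _ _ (Hc _)). }
  assert (Pw : forall j, inj_into (Aleph (j + n) -> Prop) (Aleph n -> Prop)).
  { induction j. apply inj_refl. simpl. eapply inj_trans; [|apply IHj].
    apply (galvin _ _ _ (Hc _)). apply NG. lia. }
  set (X := Aleph n).
  assert (Fk : forall k, inj_into (Aleph k) (X -> Prop)).
  { intro k. eapply inj_trans; [apply (Up n k)|]. eapply inj_trans; [apply inj_singleton|].
    replace (n + k) with (k + n) by lia. apply Pw. }
  assert (HnX : inj_into nat X) by apply Basic.
  assert (H1 : inj_into {m : nat & Aleph m} (X -> Prop)).
  { assert (F : forall k, {f : Aleph k -> (X -> Prop) | forall x y, f x = f y -> x = y}).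
    { intro k. apply constructive_indefinite_description. apply Fk. }
    apply inj_trans with (B := (nat * (X -> Prop))%type).
    - exists (fun s => (projT1 s, proj1_sig (F (projT1 s)) (projT2 s))).
      intros [k a] [k' a'] E; simpl in E. injection E. intros E2 E1. subst k'.
      destruct (F k) as [f Hf]; simpl in *. apply Hf in E2. subst; auto.
    - eapply inj_trans; [apply inj_prod; [eapply inj_trans; [exact HnX|apply inj_singleton] | apply inj_refl]|].
      eapply inj_trans; [apply pow_pair|]. apply inj_pow. apply sum_inj; apply Basic. }
  split; [exact H1|].
  intros [g Hg].
  assert (Hh : inj_into (nat -> (X -> Prop)) (X -> Prop)).
  { eapply inj_trans; [apply curry_inj|]. apply inj_pow.
    eapply inj_trans; [apply inj_prod; [exact HnX | apply inj_refl]|]. apply Basic. }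
  destruct Hh as [h Hhi].
  set (G := fun phi => g (h phi)).
  assert (HG : forall x y, G x = G y -> x = y) by (intros x y E; apply Hhi, Hg, E).
  assert (Psi : forall m, exists psi : X -> Prop, forall phi a, G phi = existT _ m a -> phi m <> psi).
  { intro m. apply NNPP; intro N.
    assert (N' : forall psi, exists p : (nat -> (X -> Prop)) * Aleph m,
               G (fst p) = existT _ m (snd p) /\ fst p m = psi).
    { intro psi. apply NNPP; intro N2. apply N. exists psi. intros phi a E1 E2.
      apply N2. exists (phi, a). auto. }
    destruct (Hs m) as [_ [Hno _]]. apply Hno.
    eapply inj_trans; [apply Fk|].
    assert (c : forall psi, {p : (nat -> (X -> Prop)) * Aleph m |
               G (fst p) = existT _ m (snd p) /\ fst p m = psi}).
    { intro psi. apply constructive_indefinite_description. apply N'. }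
    exists (fun psi => snd (proj1_sig (c psi))).
    intros x y E. destruct (c x) as [[p1 a1] [E1 F1]]; destruct (c y) as [[p2 a2] [E2 F2]].
    simpl in *. subst a2. rewrite <- E2 in E1. apply HG in E1. subst. auto. }
  assert (psi : forall m, {psi : X -> Prop | forall phi a, G phi = existT _ m a -> phi m <> psi}).
  { intro m. apply constructive_indefinite_description. apply Psi. }
  set (phi := fun m => proj1_sig (psi m)).
  destruct (G phi) as [m a] eqn:E.
  exact (proj2_sig (psi m) phi a E eq_refl).
Qed.
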